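(* Let $\Theta\in\mathbb{R}^d$ denote a parameter vector and let $\ell:\mathcal{Z}\times\mathbb{R}^d\to[0,\infty)$ be a non-negative loss, differentiable in $\Theta$, with gradient $\nabla_{\Theta}\ell(z;\Theta)$. Let $(p^t)_{t\ge 0}$ and $p^*$ be probability densities on $\mathcal{Z}$ (with respect to a common reference measure $dz$), and set $c^t\triangleq\int|p^t(z)-p^*(z)|\,dz$. Assume: (i) (finite variance) there is $G>0$ such that for all $t$ and all $\Theta$, $\mathbb{E}_{Z\sim p^t}\big[\Vert\nabla_{\Theta}\ell(Z;\Theta)\Vert^2\big]\le G$; (ii) (convergence of the input distribution) $\sum_{t} c^t<\infty$. Then for all $\Theta$, $\mathbb{E}_{Z\sim p^*}\big[\Vert\nabla_{\Theta}\ell(Z;\Theta)\Vert^2\big]\le G$.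
   Context: This is the setting of a single module $j>1$ in a layer-wise (''greedy'') training scheme: $p^t$ is the time-varying density at step $t$ of the input sample $Z=(X,Y)$ fed to the module (the output of the previous, still-training module together with the label), $p^*$ is the density of the previous module's output at convergence, and $\ell$ is the composition of the loss with the module and its auxiliary network, whose joint parameters are $\Theta$. *)

(* Defs.v *)
From HB Require Import structures.
From mathcomp Require Import all_boot all_order all_algebra.
From mathcomp Require Import all_classical all_reals all_analysis.
Set Implicit Arguments. Unset Strict Implicit. Unset Printing Implicit Defensive.
Import Order.TTheory GRing.Theory Num.Theory.
Import numFieldNormedType.Exports.
Local Open Scope ring_scope.

Definition grad (R : realType) (d : nat) (f : 'rV[R]_d -> R) (Theta : 'rV[R]_d)
  : 'rV[R]_d := \row_(i < d) derive f Theta (delta_mx 0 i).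

Definition sqnorm (R : realType) (d : nat) (v : 'rV[R]_d) : R :=
  \sum_(i < d) (v 0 i) ^+ 2.

Definition is_density (dZ : measure_display) (Z : measurableType dZ)
  (R : realType) (mu : {measure set Z -> \bar R}) (p : Z -> R) : Prop :=
  [/\ measurable_fun setT p, (forall z, 0 <= p z)
    & (\int[mu]_z (p z)%:E = 1)%E].

Definition expect (dZ : measure_display) (Z : measurableType dZ)
  (R : realType) (mu : {measure set Z -> \bar R}) (p : Z -> R) (g : Z -> R)
  : \bar R := (\int[mu]_z (p z * g z)%:E)%E.

(* Main.v *)
Require Import Defs.
From HB Require Import structures.
From mathcomp Require Import all_boot all_order all_algebra.
From mathcomp Require Import all_classical all_reals all_analysis.
From mathcomp Require Import measurable_realfun.
From mathcomp Require Import lra.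
Import Order.TTheory GRing.Theory Num.Theory.
Import numFieldNormedType.Exports.
Local Open Scope ring_scope.
Lemma small_term (R : realType) (c : nat -> \bar R) :
  (forall t, 0 <= c t)%E ->
  (\sum_(0 <= t <oo) c t < +oo)%E ->
  forall eps : R, 0 < eps -> exists t, (c t <= eps%:E)%E.
Proof.
move=> c0 cfin eps eps0; apply/not_existsP => /= H.
have Hc t : (eps%:E < c t)%E by rewrite ltNge; apply/negP/H.
have S0 : (0 <= \sum_(0 <= t <oo) c t)%E by apply: nneseries_ge0 => n _ _.
have [s HS] : exists s, (\sum_(0 <= t <oo) c t)%E = s%:E.
  move: cfin S0; case: (\sum_(0 <= t <oo) c t)%E => [s| |] //; by exists s.
have Hk k' : ((k'%:R * eps)%:E <= \sum_(0 <= t < k') c t)%E.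
  elim: k' => [|k' IH]; first by rewrite big_geq // mul0r.
  rewrite big_nat_recr //= mulrSr mulrDl mul1r EFinD.
  by apply: leeD => //; apply/ltW.
have := Hk (Num.truncn (s / eps)).+1.
have := @nneseries_lim_ge R c xpredT 0 (Num.truncn (s / eps)).+1 (fun n _ _ => c0 n).
rewrite HS => H1 H2.
have := le_trans H2 H1; rewrite lee_fin -ler_pdivlMr //.
by rewrite leNgt truncnS_gt.
Qed.

Theorem lemma1 (R : realType) (d : nat) (dZ : measure_display)
  (Z : measurableType dZ) (mu : {measure set Z -> \bar R})
  (loss : Z -> 'rV[R]_d -> R) (p : nat -> Z -> R) (pstar : Z -> R) (G : R) :
  (forall z Theta, 0 <= loss z Theta) ->
  (forall z Theta, differentiable (loss z) Theta) ->
  (forall Theta, measurable_fun setT (fun z => sqnorm (grad (loss z) Theta))) ->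
  (forall t, is_density mu (p t)) ->
  is_density mu pstar ->
  0 < G ->
  (forall t Theta,
      (expect mu (p t) (fun z => sqnorm (grad (loss z) Theta)) <= G%:E)%E) ->
  (\sum_(0 <= t <oo) \int[mu]_z (`|p t z - pstar z|)%:E < +oo)%E ->
  forall Theta,
    (expect mu pstar (fun z => sqnorm (grad (loss z) Theta)) <= G%:E)%E.
Proof.
move=> _ _ mg dp [mps ps0 _] G0 HG Hsum Theta.
rewrite /expect.
set gg := fun z => sqnorm (grad (loss z) Theta).
have gg0 z : 0 <= gg z by rewrite /gg /sqnorm; apply: sumr_ge0 => i _; apply: sqr_ge0.
have mgg : measurable_fun setT gg := mg Theta.
have hsmall : forall eps : R, 0 < eps -> exists t, (\int[mu]_z (`|p t z - pstar z|)%:E <= eps%:E)%E.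
  apply: small_term Hsum => t; apply: integral_ge0 => z _; rewrite lee_fin //.
pose h n z := pstar z * Num.min (gg z) n%:R.
have mh n : measurable_fun [set: Z] (EFin \o h n).
  apply/measurable_EFinP; apply: measurable_funM => //.
  exact: measurable_minr.
have h0 n x : setT x -> (0 <= (h n x)%:E)%E.
  by move=> _; rewrite lee_fin /h mulr_ge0 // le_min gg0 /= ler0n.
have ndh : forall z, setT z -> nondecreasing_seq (fun n => (h n z)%:E).
  move=> z _ m n mn; rewrite lee_fin /h ler_wpM2l // le_min !ge_min lexx /=.
  by rewrite ler_nat mn orbT.
have -> : (\int[mu]_z (pstar z * gg z)%:E = \int[mu]_(z in setT) limn (fun n => (h n z)%:E))%E.
  apply: eq_integral => z _; apply/esym/cvg_lim => //.
  apply: cvg_near_cst; near=> n; rewrite /h; congr (_ * _)%:E.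
  apply/min_idPl; apply: ltW; near: n; exact: nbhs_infty_gtr.
rewrite (monotone_convergence mu measurableT mh h0 ndh).
apply: lime_le.
  by apply: ereal_nondecreasing_is_cvgn => m n mn; apply: ge0_le_integral => // x _; [exact: h0|exact: ndh].
apply: nearW => n.
apply/lee_addgt0Pr => e e0.
set M := n%:R + 1 : R.
have M0 : 0 < M by rewrite /M ltr_wpDl.
have [t Ht] := hsmall (e / M) (divr_gt0 e0 M0).
have [mpt pt0 _] := dp t.
have Hpt := HG t Theta; rewrite /expect -/gg in Hpt.
have mabs : measurable_fun [set: Z] (fun z => `|p t z - pstar z|).
  by apply: measurableT_comp => //; apply: measurable_funB.
apply: (@le_trans _ _ (\int[mu]_(z in setT) ((p t z * gg z)%:E + M%:E * (`|p t z - pstar z|)%:E))%E).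
  apply: ge0_le_integral => //.
  - exact: h0.
  - apply: emeasurable_funD.
      by apply/measurable_EFinP; apply: measurable_funM.
    by apply: emeasurable_funM => //; apply/measurable_EFinP.
  move=> z _; rewrite -EFinM -EFinD lee_fin /h.
  set m := Num.min (gg z) n%:R.
  have m0 : 0 <= m by rewrite le_min gg0 /= ler0n.
  have mgz : m <= gg z by rewrite ge_min lexx.
  have mM : m <= M by rewrite ge_min /M lerDl ler01 orbT.
  have a1 : pstar z - p t z <= `|p t z - pstar z| by rewrite distrC ler_norm.
  have a2 : 0 <= `|p t z - pstar z| by [].
  have pt := pt0 z.
  nra.
rewrite ge0_integralD //; last 4 first.
- by move=> z _; rewrite lee_fin mulr_ge0.
- by apply/measurable_EFinP; apply: measurable_funM.
- by move=> z _; rewrite -EFinM lee_fin mulr_ge0 // ltW.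
- by apply: emeasurable_funM => //; apply/measurable_EFinP.
rewrite ge0_integralZl //; last 2 first.
- exact/measurable_EFinP.
- by rewrite lee_fin ltW.
apply: leeD => //.
apply: (@le_trans _ _ (M%:E * (e / M)%:E)%E).
  by apply: lee_wpmul2l => //; rewrite lee_fin ltW.
by rewrite -EFinM lee_fin mulrC divfK // gt_eqF.
Unshelve. all: by end_near.
Qed.
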